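(* For every infinite computable set $R$, the cost function $\mathbf c_{\Omega,R}$ is benign.
   Context: $\Omega$: fixed left-c.e. ML-random real with computable increasing rational approximations $\Omega_s$. $k_s(n)=\lfloor-\log_2(\Omega_s-\Omega_n)\rfloor$; $\mathbf c_{\Omega,R}(n,s)=2^{-|R\cap k_s(n)|}$ with $R\cap m=R\cap\{0,\dots,m-1\}$. A cost function $\mathbf c$ is benign if there is a computable function $g$ such that for every rational $\epsilon>0$, every sequence $n_1<s_1\le n_2<s_2\le\cdots\le n_\ell<s_\ell$ with $\mathbf c(n_i,s_i)\ge\epsilon$ for all $i\le\ell$ has $\ell\le g(\epsilon)$. *)

(* Defs.v *)
From Stdlib Require Import Reals QArith Qreals ZArith Arith List.
Import ListNotations.
Open Scope R_scope.

Inductive prf : Type :=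
| PZero : prf
| PSucc : prf
| PProj : nat -> prf
| PComp : prf -> list prf -> prf
| PRec  : prf -> prf -> prf
| PMu   : prf -> prf.

Inductive eval : prf -> list nat -> nat -> Prop :=
| ev_zero : forall v, eval PZero v 0
| ev_succ : forall x v, eval PSucc (x :: v) (S x)
| ev_proj : forall i v, eval (PProj i) v (nth i v 0%nat)
| ev_comp : forall f gs v ws y,
    evals gs v ws -> eval f ws y -> eval (PComp f gs) v y
| ev_rec0 : forall f g v y, eval f v y -> eval (PRec f g) (0%nat :: v) y
| ev_recS : forall f g n v r y,
    eval (PRec f g) (n :: v) r -> eval g (n :: r :: v) y ->
    eval (PRec f g) (S n :: v) y
| ev_mu : forall f v y,
    eval f (y :: v) 0 ->
    (forall z, (z < y)%nat -> exists k, eval f (z :: v) (S k)) ->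
    eval (PMu f) v y
with evals : list prf -> list nat -> list nat -> Prop :=
| evs_nil : forall v, evals [] v []
| evs_cons : forall g gs v w ws,
    eval g v w -> evals gs v ws -> evals (g :: gs) v (w :: ws).

Definition computable1 (f : nat -> nat) : Prop :=
  exists p, forall n, eval p [n] (f n).

Definition computable2 (f : nat -> nat -> nat) : Prop :=
  exists p, forall n m, eval p [n; m] (f n m).

Definition computable_set (R : nat -> bool) : Prop :=
  computable1 (fun n => if R n then 1%nat else 0%nat).

(* A function from rationals to naturals is computable: computable from the
   representation (numerator as a difference of naturals, denominator). *)
Definition computable_Q_nat (g : Q -> nat) : Prop :=
  exists p, forall (z : Z) (d : positive),
    eval p [Z.to_nat z; Z.to_nat (- z); Pos.to_nat d] (g (Qmake z d)).

Definition computable_seq_Q (q : nat -> Q) : Prop :=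
  exists a b c : nat -> nat,
    computable1 a /\ computable1 b /\ computable1 c /\
    forall s, (q s == Qmake (Z.of_nat (a s) - Z.of_nat (b s))
                            (Pos.of_succ_nat (c s)))%Q.

(* bijection positive <-> list bool; strings coded by naturals *)
Fixpoint pos_bits (p : positive) : list bool :=
  match p with
  | xH => []
  | xO p' => false :: pos_bits p'
  | xI p' => true :: pos_bits p'
  end.

Definition decode_str (c : nat) : list bool := pos_bits (Pos.of_succ_nat c).

Fixpoint is_prefix (s t : list bool) : bool :=
  match s, t with
  | [], _ => true
  | b :: s', b' :: t' => Bool.eqb b b' && is_prefix s' t'
  | _ :: _, [] => false
  end.

Fixpoint all_strings (L : nat) : list (list bool) :=
  match L with
  | O => [[]]
  | S L' => map (cons false) (all_strings L') ++ map (cons true) (all_strings L')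
  end.

(* Lebesgue measure of the open set generated by a finite list of strings *)
Definition meas (S : list (list bool)) : R :=
  let L := fold_right (fun s m => Nat.max (length s) m) 0%nat S in
  INR (length (filter (fun t => existsb (fun s => is_prefix s t) S)
                      (all_strings L))) / 2 ^ L.

(* i-th bit of the binary expansion of (the fractional part of) x *)
Definition real_bit (x : R) (i : nat) : bool :=
  Z.eqb (Z.modulo (Int_part (x * 2 ^ (S i))) 2) 1.

Definition in_cyl (x : R) (s : list bool) : Prop :=
  forall i, (i < length s)%nat -> real_bit x i = nth i s false.

(* Martin-Loef test: uniformly c.e. sequence (U_n) of sets of strings;
   [h n t = S c] means that string [decode_str c] is enumerated into U_n at
   stage t; [h n t = 0] means nothing is enumerated. *)
Definition enum_upto (h : nat -> nat -> nat) (n T : nat) : list (list bool) :=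
  flat_map (fun t => match h n t with
                     | O => []
                     | S c => [decode_str c]
                     end) (seq 0 T).

Definition ML_test (h : nat -> nat -> nat) : Prop :=
  computable2 h /\
  forall n T, meas (enum_upto h n T) <= (/ 2) ^ n.

Definition ML_random (x : R) : Prop :=
  forall h, ML_test h ->
    exists n, forall t c, h n t = S c -> ~ in_cyl x (decode_str c).

Definition left_ce_approx (Om : R) (Oms : nat -> Q) : Prop :=
  computable_seq_Q Oms /\
  (forall s, (Oms s < Oms (S s))%Q) /\
  Un_cv (fun s => Q2R (Oms s)) Om.

Definition kfun (Oms : nat -> Q) (n s : nat) : Z :=
  Int_part (- (ln (Q2R (Oms s) - Q2R (Oms n)) / ln 2)).

Definition card_below (Rs : nat -> bool) (m : Z) : nat :=
  length (filter Rs (seq 0 (Z.to_nat m))).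

Definition cost_OmR (Oms : nat -> Q) (Rs : nat -> bool) (n s : nat) : R :=
  (/ 2) ^ (card_below Rs (kfun Oms n s)).

Definition benign (c : nat -> nat -> R) : Prop :=
  exists g : Q -> nat, computable_Q_nat g /\
    forall (eps : Q), (0 < eps)%Q ->
    forall (l : nat) (ns ss : nat -> nat),
      (forall i, (i < l)%nat -> (ns i < ss i)%nat) ->
      (forall i, (S i < l)%nat -> (ss i <= ns (S i))%nat) ->
      (forall i, (i < l)%nat -> c (ns i) (ss i) >= Q2R eps) ->
      (l <= g eps)%nat.

Definition infinite_set (Rs : nat -> bool) : Prop :=
  forall m, exists i, (m <= i)%nat /\ Rs i = true.

(* Main.v *)
Require Import Defs.
From Stdlib Require Import Reals QArith Qreals ZArith Arith List Lia Lra.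
Import ListNotations.
Lemma proj_ev i v y : nth i v 0%nat = y -> eval (PProj i) v y.
Proof. intros <-. constructor. Qed.

Definition Padd := PRec (PProj 0) (PComp PSucc [PProj 1]).
Lemma ev_add n m : eval Padd [n; m] (n + m)%nat.
Proof.
  induction n; simpl.
  - constructor. apply proj_ev; reflexivity.
  - eapply ev_recS. exact IHn.
    eapply ev_comp. constructor. apply proj_ev; reflexivity. constructor.
    constructor.
Qed.

Definition Pmul := PRec PZero (PComp Padd [PProj 1; PProj 2]).
Lemma ev_mul n m : eval Pmul [n; m] (n * m)%nat.
Proof.
  induction n; simpl.
  - constructor. constructor.
  - eapply ev_recS. exact IHn.
    eapply ev_comp. constructor. apply proj_ev; reflexivity.
    constructor. apply proj_ev; reflexivity. constructor.
    replace (m + n * m)%nat with (n * m + m)%nat by lia. apply ev_add.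
Qed.

Definition Ppow2 := PRec (PComp PSucc [PZero]) (PComp Padd [PProj 1; PProj 1]).
Lemma ev_pow2 n : eval Ppow2 [n] (2 ^ n)%nat.
Proof.
  induction n; simpl.
  - constructor. eapply ev_comp. constructor. constructor. constructor. constructor.
  - eapply ev_recS. exact IHn.
    eapply ev_comp. constructor. apply proj_ev; reflexivity.
    constructor. apply proj_ev; reflexivity. constructor.
    replace (2 ^ n + (2 ^ n + 0))%nat with (2 ^ n + 2 ^ n)%nat by lia. apply ev_add.
Qed.

Definition Ppred := PRec PZero (PProj 0).
Lemma ev_pred n : eval Ppred [n] (Nat.pred n).
Proof.
  induction n; simpl.
  - constructor. constructor.
  - eapply ev_recS. exact IHn.
    apply proj_ev; reflexivity.
Qed.

Definition Psub := PRec (PProj 0) (PComp Ppred [PProj 1]).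
Lemma ev_sub n m : eval Psub [n; m] (m - n)%nat.
Proof.
  induction n; simpl.
  - constructor. apply proj_ev; simpl; lia.
  - eapply ev_recS. exact IHn.
    eapply ev_comp. constructor. apply proj_ev; reflexivity. constructor.
    replace (m - S n)%nat with (Nat.pred (m - n)) by lia. apply ev_pred.
Qed.

Fixpoint Pconst (k : nat) : prf :=
  match k with O => PZero | S k' => PComp PSucc [Pconst k'] end.
Lemma ev_const k v : eval (Pconst k) v k.
Proof.
  induction k; simpl. constructor.
  eapply ev_comp. constructor. exact IHk. constructor. constructor.
Qed.

Definition cnt (Rs : nat -> bool) (j : nat) : nat := length (filter Rs (seq 0 j)).

Lemma cnt_S Rs j : cnt Rs (S j) = (cnt Rs j + (if Rs j then 1%nat else 0%nat))%nat.
Proof.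
  unfold cnt. rewrite seq_S, filter_app, length_app. simpl.
  destruct (Rs j); reflexivity.
Qed.

Definition Pcnt (pR : prf) := PRec PZero (PComp Padd [PProj 1; PComp pR [PProj 0]]).
Lemma ev_cnt (Rs : nat -> bool) pR : (forall n, eval pR [n] (if Rs n then 1 else 0)%nat) ->
  forall j, eval (Pcnt pR) [j] (cnt Rs j).
Proof.
  intros HR j. induction j.
  - constructor. constructor.
  - eapply ev_recS. exact IHj. rewrite cnt_S.
    eapply ev_comp. constructor. apply proj_ev; reflexivity.
    constructor. eapply ev_comp. constructor. apply proj_ev; reflexivity.
    constructor. apply HR. constructor. apply ev_add.
Qed.

Lemma least_zero (h : nat -> nat) y0 : h y0 = 0%nat ->
  exists y, h y = 0%nat /\ forall z, (z < y)%nat -> h z <> 0%nat.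
Proof.
  revert h. induction y0; intros h H.
  - exists 0%nat. split; auto. intros; lia.
  - destruct (Nat.eq_dec (h 0%nat) 0) as [E|E].
    + exists 0%nat. split; auto. intros; lia.
    + destruct (IHy0 (fun n => h (S n)) H) as [y [Hy Hz]].
      exists (S y). split; auto. intros z Hzl. destruct z; auto.
      apply Hz. lia.
Qed.

Lemma ev_mu_fun f v (h : nat -> nat) y0 :
  (forall y, eval f (y :: v) (h y)) -> h y0 = 0%nat ->
  exists y, h y = 0%nat /\ eval (PMu f) v y.
Proof.
  intros Hf H0. destruct (least_zero h y0 H0) as [y [Hy Hz]].
  exists y. split; auto. constructor. rewrite <- Hy. apply Hf.
  intros z Hzy. specialize (Hz z Hzy). destruct (h z) eqn:E. congruence.
  exists n. rewrite <- E. apply Hf.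
Qed.
Open Scope R_scope.

Lemma cnt_mono (Rs : nat -> bool) a b : (a <= b)%nat -> (cnt Rs a <= cnt Rs b)%nat.
Proof.
  intros H. induction H. lia. rewrite cnt_S. lia.
Qed.

Lemma cnt_unb (Rs : nat -> bool) : infinite_set Rs -> forall d, exists y, (d <= cnt Rs y)%nat.
Proof.
  intros Hinf d. induction d.
  - exists 0%nat. lia.
  - destruct IHd as [y Hy]. destruct (Hinf y) as [i [Hi HRi]].
    exists (S i). rewrite cnt_S, HRi. pose proof (cnt_mono Rs _ _ Hi). lia.
Qed.

Lemma INR_lt_pow2 d : INR d < 2 ^ d.
Proof.
  pose proof (Nat.pow_gt_lin_r 2 d ltac:(lia)).
  apply lt_INR in H. rewrite pow_INR in H. replace (INR 2) with 2 in H by (simpl; lra). lra.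
Qed.

Lemma Q2R_mono (Oms : nat -> Q) : (forall s, (Oms s < Oms (S s))%Q) ->
  forall a b, (a <= b)%nat -> Q2R (Oms a) <= Q2R (Oms b).
Proof.
  intros H a b Hab. induction Hab. lra.
  pose proof (Qlt_Rlt _ _ (H m)). lra.
Qed.

Lemma Q2R_smono (Oms : nat -> Q) : (forall s, (Oms s < Oms (S s))%Q) ->
  forall a b, (a < b)%nat -> Q2R (Oms a) < Q2R (Oms b).
Proof.
  intros H a b Hab. pose proof (Qlt_Rlt _ _ (H a)).
  pose proof (Q2R_mono Oms H (S a) b Hab). lra.
Qed.

Lemma gap (Oms : nat -> Q) (Rs : nat -> bool) d j n s :
  (forall s, (Oms s < Oms (S s))%Q) -> (n < s)%nat -> (d <= cnt Rs j)%nat ->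
  cost_OmR Oms Rs n s >= / INR d -> (0 < d)%nat ->
  Q2R (Oms s) - Q2R (Oms n) > (/ 2) ^ j.
Proof.
  intros Hinc Hns Hdj Hc Hd.
  pose proof (Q2R_smono Oms Hinc n s Hns) as Hpos.
  set (D := Q2R (Oms s) - Q2R (Oms n)) in *.
  assert (HD : 0 < D) by (unfold D; lra).
  unfold cost_OmR in Hc. set (k := kfun Oms n s) in *.
  assert (Hcd : (card_below Rs k < d)%nat).
  { destruct (Nat.lt_ge_cases (card_below Rs k) d) as [?|Hge]; auto.
    exfalso. set (c := card_below Rs k) in *.
    rewrite pow_inv in Hc.
    assert (H2 : 2 ^ d <= 2 ^ c) by (apply Rle_pow; lra || lia).
    pose proof (INR_lt_pow2 d).
    assert (0 < INR d) by (apply lt_0_INR; lia).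
    assert (/ 2 ^ c < / INR d).
    { apply Rinv_lt_contravar. apply Rmult_lt_0_compat; lra. lra. }
    lra. }
  assert (HK : (Z.to_nat k < j)%nat).
  { destruct (Nat.lt_ge_cases (Z.to_nat k) j) as [?|Hge]; auto.
    exfalso. pose proof (cnt_mono Rs _ _ Hge). unfold card_below in Hcd.
    unfold cnt in *. lia. }
  assert (Hkj : IZR k + 1 <= INR j).
  { destruct (Z.le_gt_cases 0 k) as [Hk|Hk].
    - assert (E : INR (Z.to_nat k) = IZR k) by (rewrite INR_IZR_INZ, Z2Nat.id; auto).
      apply le_INR in HK. rewrite S_INR in HK. lra.
    - assert (IZR k <= -1) by (apply IZR_le; lia). pose proof (pos_INR j). lra. }
  destruct (base_Int_part (- (ln D / ln 2))) as [_ Hb].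
  assert (Hb' : IZR k - - (ln D / ln 2) > -1) by exact Hb. clear Hb.
  assert (Hl2 : 0 < ln 2) by (rewrite <- ln_1; apply ln_increasing; lra).
  assert (Hx : - (ln D / ln 2) < INR j) by lra.
  assert (Hx2 : - ln D < INR j * ln 2).
  { unfold Rdiv in Hx. apply Rmult_lt_reg_r with (/ ln 2).
    apply Rinv_0_lt_compat; lra.
    rewrite Rmult_assoc, Rinv_r by lra. lra. }
  apply Rlt_gt, ln_lt_inv. apply pow_lt; lra. exact HD.
  rewrite ln_pow by lra. rewrite ln_Rinv by lra. lra.
Qed.

Lemma tele (Oms : nat -> Q) (delta : R) l (ns ss : nat -> nat) :
  (forall s, (Oms s < Oms (S s))%Q) ->
  (forall i, (S i < l)%nat -> (ss i <= ns (S i))%nat) ->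
  (forall i, (i < l)%nat -> Q2R (Oms (ss i)) - Q2R (Oms (ns i)) > delta) ->
  forall j, (1 <= j <= l)%nat ->
  INR j * delta < Q2R (Oms (ss (j - 1)%nat)) - Q2R (Oms (ns 0%nat)).
Proof.
  intros Hinc Hsn Hg j. induction j as [|j IH]; intros Hj. lia.
  destruct j as [|j'].
  - simpl. specialize (Hg 0%nat ltac:(lia)). lra.
  - specialize (IH ltac:(lia)). replace (S (S j') - 1)%nat with (S j') by lia.
    replace (S j' - 1)%nat with j' in IH by lia.
    pose proof (Q2R_mono Oms Hinc _ _ (Hsn j' ltac:(lia))).
    specialize (Hg (S j') ltac:(lia)).
    rewrite S_INR. lra.
Qed.

Lemma below_lim Om (Oms : nat -> Q) : left_ce_approx Om Oms -> forall s, Q2R (Oms s) < Om.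
Proof.
  intros [_ [Hinc Hcv]] s.
  destruct (Rlt_or_le (Q2R (Oms s)) Om) as [H|H]; auto. exfalso.
  pose proof (Qlt_Rlt _ _ (Hinc s)) as H1.
  destruct (Hcv (Q2R (Oms (S s)) - Q2R (Oms s)) ltac:(lra)) as [M HM].
  specialize (HM (Nat.max M (S s)) ltac:(lia)).
  pose proof (Q2R_mono Oms Hinc (S s) (Nat.max M (S s)) ltac:(lia)).
  unfold R_dist in HM. apply Rabs_def2 in HM. lra.
Qed.

Lemma key Om (Oms : nat -> Q) (Rs : nat -> bool) N d j :
  left_ce_approx Om Oms -> Om - Q2R (Oms 0%nat) <= INR N ->
  (0 < d)%nat -> (d <= cnt Rs j)%nat ->
  forall l (ns ss : nat -> nat),
      (forall i, (i < l)%nat -> (ns i < ss i)%nat) ->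
      (forall i, (S i < l)%nat -> (ss i <= ns (S i))%nat) ->
      (forall i, (i < l)%nat -> cost_OmR Oms Rs (ns i) (ss i) >= / INR d) ->
      (l <= N * 2 ^ j)%nat.
Proof.
  intros HOm HN Hd Hdj l ns ss H1 H2 H3.
  destruct l as [|l']. lia.
  pose proof HOm as [_ [Hinc _]].
  assert (Hg : forall i, (i < S l')%nat -> Q2R (Oms (ss i)) - Q2R (Oms (ns i)) > (/2) ^ j).
  { intros i Hi. eapply gap; eauto. }
  pose proof (tele Oms _ (S l') ns ss Hinc H2 Hg (S l') ltac:(lia)) as T.
  pose proof (below_lim Om Oms HOm (ss (S l' - 1)%nat)).
  pose proof (Q2R_mono Oms Hinc 0 (ns 0%nat) ltac:(lia)).
  assert (Hlt : INR (S l') * (/2) ^ j < INR N) by lra.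
  assert (Hp : 0 < 2 ^ j) by (apply pow_lt; lra).
  assert (HF : INR (S l') < INR (N * 2 ^ j)).
  { rewrite mult_INR, pow_INR. replace (INR 2) with 2 by (simpl; lra).
    rewrite pow_inv in Hlt.
    apply Rmult_lt_compat_r with (r := 2 ^ j) in Hlt; auto.
    rewrite Rmult_assoc, Rinv_l in Hlt by lra. lra. }
  apply INR_lt in HF. lia.
Qed.
From Stdlib Require Import ClassicalEpsilon.

Theorem proposition7p2 (Om : R) (Oms : nat -> Q)
  (HOm : left_ce_approx Om Oms) (Hrand : ML_random Om) :
  forall Rs : nat -> bool, computable_set Rs -> infinite_set Rs ->
    benign (cost_OmR Oms Rs).
Proof.
  intros Rs [pR HpR] Hinf.
  assert (HN : exists N, Om - Q2R (Oms 0%nat) <= INR N).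
  { destruct (archimed (Om - Q2R (Oms 0%nat))) as [Ha _].
    exists (Z.to_nat (up (Om - Q2R (Oms 0%nat)))).
    rewrite INR_IZR_INZ, ZifyInst.of_nat_to_nat_eq.
    destruct (Z.le_gt_cases 0 (up (Om - Q2R (Oms 0%nat)))) as [Hz|Hz].
    - rewrite Z.max_r by lia. lra.
    - rewrite Z.max_l by lia. apply IZR_lt in Hz. lra. }
  destruct HN as [N HN].
  set (fP := PComp Psub [PComp (Pcnt pR) [PProj 0]; PProj 1]).
  assert (Hf : forall d y, eval fP (y :: [d]) (d - cnt Rs y)%nat).
  { intros d y. eapply ev_comp. constructor.
    eapply ev_comp. constructor. apply proj_ev; reflexivity. constructor.
    apply ev_cnt. exact HpR.
    constructor. apply proj_ev; reflexivity. constructor. apply ev_sub. }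
  assert (Hex : forall d, exists y, (d <= cnt Rs y)%nat /\ eval (PMu fP) [d] y).
  { intros d. destruct (cnt_unb Rs Hinf d) as [y0 Hy0].
    destruct (ev_mu_fun fP [d] (fun y => d - cnt Rs y)%nat y0 (Hf d) ltac:(cbv beta; lia))
      as [y [Hy Hev]].
    exists y. split; auto. lia. }
  set (F := fun d => proj1_sig (constructive_indefinite_description _ (Hex d))).
  assert (HF : forall d, (d <= cnt Rs (F d))%nat /\ eval (PMu fP) [d] (F d)).
  { intros d. exact (proj2_sig (constructive_indefinite_description _ (Hex d))). }
  exists (fun eps => N * 2 ^ F (Pos.to_nat (Qden eps)))%nat. split.
  - exists (PComp (PComp Pmul [Pconst N; PComp Ppow2 [PMu fP]]) [PProj 2]).
    intros z d. simpl Qden.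
    eapply ev_comp. constructor. apply proj_ev; reflexivity. constructor.
    eapply ev_comp. constructor. apply ev_const. constructor.
    eapply ev_comp. constructor. exact (proj2 (HF _)). constructor.
    apply ev_pow2. constructor. apply ev_mul.
  - intros [z dd] Heps l ns ss H1 H2 H3. simpl Qden.
    set (d := Pos.to_nat dd).
    assert (Hd : (0 < d)%nat) by (unfold d; lia).
    apply (key Om Oms Rs N d (F d) HOm HN Hd (proj1 (HF d)) l ns ss H1 H2).
    intros i Hi. specialize (H3 i Hi).
    assert (Hz : (1 <= z)%Z).
    { unfold Qlt in Heps. simpl in Heps. lia. }
    assert (Q2R (z # dd) >= / INR d).
    { unfold Q2R. simpl. unfold d. rewrite INR_IZR_INZ, positive_nat_Z.
      apply IZR_le in Hz.
      assert (0 < / IZR (Z.pos dd)) by (apply Rinv_0_lt_compat, IZR_lt; lia).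
      nra. }
    lra.
Qed.
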